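(* Let $t\in\mathbb{N}\setminus\{0,1\}$, let $K_1,\ldots,K_t,L_1,\ldots,L_t$ be bi--lattices with $|K_i|>2$ for all $i\in[1,t]$, let $K=\boxplus_{i=1}^tK_i$ and $L=\boxplus_{i=1}^t({\cal L}_2\oplus L_i\oplus{\cal L}_2)$. Then: (1) ${\rm Con}_{\mathbb{BI}}(K)=\{\boxplus_{i=1}^t\alpha_i\ :\ \alpha_i\in{\rm Con}_{\mathbb{BI}01}(K_i)\text{ for all }i\in[1,t]\}\cup\{\nabla_K\}\cong\left(\prod_{i=1}^t{\rm Con}_{\mathbb{BI}01}(K_i)\right)\oplus{\cal L}_2$; (2) ${\rm Con}_{\mathbb{BI}}(L)=\{eq(\{\{0\},\{1\}\}\cup\bigcup_{i=1}^tL_i/\alpha_i)\ :\ \alpha_i\in{\rm Con}_{\mathbb{BI}}(L_i)\text{ for all }i\in[1,t]\}\cup\{\nabla_L\}\cong\left(\prod_{i=1}^t{\rm Con}_{\mathbb{BI}}(L_i)\right)\oplus{\cal L}_2$.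
   Context: A bi--lattice is a bounded lattice with a unary operation $'$ satisfying $a''=a$ and $a\leq b\Rightarrow b'\leq a'$. ${\rm Con}_{\mathbb{BI}}(A)$ is the lattice of lattice congruences $\theta$ of $A$ with $(a,b)\in\theta\Rightarrow(a',b')\in\theta$; ${\rm Con}_{\mathbb{BI}01}(A)$ is the set of those $\theta\in{\rm Con}_{\mathbb{BI}}(A)$ with $0/\theta=\{0\}$ and $1/\theta=\{1\}$. $\Delta_A$, $\nabla_A$ are the identity and total relations; for a partition $\pi$ of a set, $eq(\pi)$ is the corresponding equivalence. ${\cal L}_2$ is the two--element chain. Ordinal sum $A\oplus B$ (lattice $A$ with top, $B$ with bottom): $B$ placed above $A$ with the top of $A$ identified with the bottom of $B$; for a bi--lattice $M$, ${\cal L}_2\oplus M\oplus{\cal L}_2$ is the bi--lattice obtained by adding a new bottom $0$ and new top $1$ to $M$, with $0'=1$, $1'=0$ and the involution of $M$ on $M$. Horizontal sum $A\boxplus B$ of non--trivial bounded lattices: the disjoint union of $A$ and $B$ with their bottoms identified (as $0$) and their tops identified (as $1$), ordered by the union of the two orders; for bi--lattices its involution is that of $A$ on $A$ and that of $B$ on $B$; this operation is associative and commutative. For equivalences $\delta\neq\nabla_A$ on $A$ and $\varepsilon\neq\nabla_B$ on $B$, $\delta\boxplus\varepsilon$ is the equivalence on $A\boxplus B$ whose classes are the classes of $\delta$ other than $0/\delta,1/\delta$, the classes of $\varepsilon$ other than $0/\varepsilon,1/\varepsilon$, and $0/\delta\cup0/\varepsilon$, $1/\delta\cup1/\varepsilon$;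 this operation is extended associatively to $\boxplus_{i=1}^t\alpha_i$. Products of lattices are direct products; $\cong$ is lattice isomorphism. *)

(* Defs.v *)
From Stdlib Require Import ClassicalEpsilon.
From mathcomp Require Import ssreflect ssrfun ssrbool eqtype ssrnat fintype.

Set Implicit Arguments.
Unset Strict Implicit.
Unset Printing Implicit Defensive.

Record biops := BiOps {
  bcar :> Type;
  bmeet : bcar -> bcar -> bcar;
  bjoin : bcar -> bcar -> bcar;
  binv  : bcar -> bcar;
  bbot  : bcar;
  btop  : bcar }.

Arguments bmeet {b}. Arguments bjoin {b}. Arguments binv {b}.

Definition ble (A : biops) (x y : A) : Prop := bmeet x y = x.

Definition is_bilattice (A : biops) : Prop :=
  (forall x y : A, bmeet x y = bmeet y x) /\
  (forall x y : A, bjoin x y = bjoin y x) /\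
  (forall x y z : A, bmeet x (bmeet y z) = bmeet (bmeet x y) z) /\
  (forall x y z : A, bjoin x (bjoin y z) = bjoin (bjoin x y) z) /\
  (forall x y : A, bmeet x (bjoin x y) = x) /\
  (forall x y : A, bjoin x (bmeet x y) = x) /\
  (forall x : A, ble (bbot A) x /\ ble x (btop A)) /\
  (forall x : A, binv (binv x) = x) /\
  (forall x y : A, ble x y -> ble (binv y) (binv x)).

Definition rel_of (A : Type) := A -> A -> Prop.

Definition is_equiv (A : Type) (th : rel_of A) : Prop :=
  [/\ (forall x, th x x), (forall x y, th x y -> th y x) &
      (forall x y z, th x y -> th y z -> th x z)].

Definition isConBI (A : biops) (th : rel_of A) : Prop :=
  [/\ is_equiv th,
      (forall a b c d, th a b -> th c d -> th (bmeet a c) (bmeet b d)),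
      (forall a b c d, th a b -> th c d -> th (bjoin a c) (bjoin b d)) &
      (forall a b, th a b -> th (binv a) (binv b))].

Definition isConBI01 (A : biops) (th : rel_of A) : Prop :=
  [/\ isConBI th,
      (forall x, th x (bbot A) -> x = bbot A) &
      (forall x, th x (btop A) -> x = btop A)].

Definition nabla (A : Type) : rel_of A := fun _ _ => True.

Definition ConBI (A : biops) := {th : rel_of A | isConBI th}.
Definition ConBI01 (A : biops) := {th : rel_of A | isConBI01 th}.

Definition rel_incl (A : Type) (th ph : rel_of A) : Prop :=
  forall x y, th x y -> ph x y.

(* Ordinal sum L2 (+) M (+) L2 : new bottom and new top.               *)
Inductive ocar (M : Type) := OBot | OMid of M | OTop.
Arguments OBot {M}. Arguments OTop {M}.

Definition omeet (M : biops) (u v : ocar M) : ocar M :=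
  match u, v with
  | OBot, _ => OBot
  | _, OBot => OBot
  | OTop, v => v
  | u, OTop => u
  | OMid x, OMid y => OMid (bmeet x y)
  end.

Definition ojoin (M : biops) (u v : ocar M) : ocar M :=
  match u, v with
  | OTop, _ => OTop
  | _, OTop => OTop
  | OBot, v => v
  | u, OBot => u
  | OMid x, OMid y => OMid (bjoin x y)
  end.

Definition oinv (M : biops) (u : ocar M) : ocar M :=
  match u with OBot => OTop | OTop => OBot | OMid x => OMid (binv x) end.

Definition osum (M : biops) : biops :=
  BiOps (@omeet M) (@ojoin M) (@oinv M) OBot OTop.

(* Horizontal sum of a family (A i)_{i in I}: bottoms identified as 0,  *)
(* tops identified as 1, the remaining elements kept disjoint.          *)
Section HSum.
Variables (I : eqType) (A : I -> biops).

Inductive hcar :=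
  | H0 | H1
  | Hin (i : I) (x : A i) of x <> bbot (A i) /\ x <> btop (A i).

Definition hemb (i : I) (x : A i) : hcar :=
  match excluded_middle_informative (x = bbot (A i)) with
  | left _ => H0
  | right n0 =>
    match excluded_middle_informative (x = btop (A i)) with
    | left _ => H1
    | right n1 => Hin (conj n0 n1)
    end
  end.

Definition htr (i j : I) (e : i = j) (x : A i) : A j :=
  eq_rect i (fun k => bcar (A k)) x j e.

Definition hmeet (u v : hcar) : hcar :=
  match u, v with
  | H0, _ => H0
  | _, H0 => H0
  | H1, v => v
  | u, H1 => u
  | @Hin i x _, @Hin j y _ =>
    match i =P j with
    | ReflectT e => hemb (bmeet (htr e x) y)
    | ReflectF _ => H0
    end
  end.

Definition hjoin (u v : hcar) : hcar :=
  match u, v with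
  | H1, _ => H1
  | _, H1 => H1
  | H0, v => v
  | u, H0 => u
  | @Hin i x _, @Hin j y _ =>
    match i =P j with
    | ReflectT e => hemb (bjoin (htr e x) y)
    | ReflectF _ => H1
    end
  end.

Definition hinv (u : hcar) : hcar :=
  match u with
  | H0 => H1
  | H1 => H0
  | @Hin i x _ => hemb (binv x)
  end.

Definition hsum : biops := BiOps hmeet hjoin hinv H0 H1.

(* boxplus_i delta_i : classes of delta_i other than 0/delta_i, 1/delta_i,
   together with  U_i 0/delta_i  and  U_i 1/delta_i. *)
Definition hsum_rel (d : forall i, rel_of (A i)) : rel_of hcar :=
  fun u v =>
    (exists i (x y : A i), d i x y /\ u = hemb x /\ v = hemb y)
    \/ (exists i j (x : A i) (y : A j),
          [/\ d i x (bbot (A i)), d j y (bbot (A j)), u = hemb x & v = hemb y])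
    \/ (exists i j (x : A i) (y : A j),
          [/\ d i x (btop (A i)), d j y (btop (A j)), u = hemb x & v = hemb y]).

(* eq({{0},{1}} U U_i A_i/alpha_i) where A i = L2 (+) L_i (+) L2 and L_i
   is identified with the middle part of A i *)
End HSum.

Arguments H0 {I A}. Arguments H1 {I A}.

Definition lsum_rel (I : eqType) (L : I -> biops)
  (a : forall i, rel_of (L i)) : rel_of (hcar (fun i => osum (L i))) :=
  fun u v =>
    (u = H0 /\ v = H0) \/ (u = H1 /\ v = H1) \/
    (exists i (x y : L i), a i x y /\
        u = hemb (A := fun i => osum (L i)) (OMid x) /\
        v = hemb (A := fun i => osum (L i)) (OMid y)).

Definition prod_le (I : Type) (P : I -> Type) (le : forall i, P i -> P i -> Prop)
  (f g : forall i, P i) : Prop := forall i, le i (f i) (g i).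

(* ordinal sum P (+) L2 of a poset P with a top: one new element above *)
Definition addtop_le (P : Type) (le : P -> P -> Prop) (u v : option P) : Prop :=
  match u, v with
  | _, None => True
  | None, Some _ => False
  | Some x, Some y => le x y
  end.

Definition order_iso (P Q : Type) (leP : P -> P -> Prop) (leQ : Q -> Q -> Prop)
  : Prop :=
  exists f : P -> Q, bijective f /\ forall x y, leP x y <-> leQ (f x) (f y).

Definition ConBI_le (A : biops) (x y : ConBI A) := rel_incl (sval x) (sval y).
Definition ConBI01_le (A : biops) (x y : ConBI01 A) := rel_incl (sval x) (sval y).

(* Main.v *)
Require Import Defs.
From mathcomp Require Import ssreflect ssrfun ssrbool eqtype ssrnat fintype.
From Stdlib Require Import FunctionalExtensionality PropExtensionality ProofIrrelevance ClassicalEpsilon.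


Set Implicit Arguments.
Unset Strict Implicit.
Unset Printing Implicit Defensive.

Section BL.
Variable M : biops.
Hypothesis HM : is_bilattice M.

Lemma bl_meetC (x y : M) : bmeet x y = bmeet y x.
Proof. by case: HM. Qed.
Lemma bl_joinC (x y : M) : bjoin x y = bjoin y x.
Proof. by case: HM => _ []. Qed.
Lemma bl_meetb (x : M) : bmeet (bbot M) x = bbot M.
Proof. by case: HM => _ [_ [_ [_ [_ [_ [H _]]]]]]; case: (H x). Qed.
Lemma bl_meetbr (x : M) : bmeet x (bbot M) = bbot M.
Proof. by rewrite bl_meetC bl_meetb. Qed.
Lemma bl_meett (x : M) : bmeet x (btop M) = x.
Proof. by case: HM => _ [_ [_ [_ [_ [_ [H _]]]]]]; case: (H x). Qed.
Lemma bl_meettl (x : M) : bmeet (btop M) x = x.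
Proof. by rewrite bl_meetC bl_meett. Qed.
Lemma bl_absj (x y : M) : bjoin x (bmeet x y) = x.
Proof. by case: HM => _ [_ [_ [_ [_ [H _]]]]]. Qed.
Lemma bl_absm (x y : M) : bmeet x (bjoin x y) = x.
Proof. by case: HM => _ [_ [_ [_ [H _]]]]. Qed.
Lemma bl_joinb (x : M) : bjoin x (bbot M) = x.
Proof. by rewrite -{2}(bl_absj x (bbot M)) bl_meetbr. Qed.
Lemma bl_joinbl (x : M) : bjoin (bbot M) x = x.
Proof. by rewrite bl_joinC bl_joinb. Qed.
Lemma bl_joint (x : M) : bjoin (btop M) x = btop M.
Proof. by rewrite -{1}(bl_meettl x) bl_absj. Qed.
Lemma bl_jointr (x : M) : bjoin x (btop M) = btop M.
Proof. by rewrite bl_joinC bl_joint. Qed.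
Lemma bl_meetI (x : M) : bmeet x x = x.
Proof. by rewrite -{2}(bl_absj x x) bl_absm. Qed.
Lemma bl_joinI (x : M) : bjoin x x = x.
Proof. by rewrite -{2}(bl_absm x x) bl_absj. Qed.
Lemma bl_invK (x : M) : binv (binv x) = x.
Proof. by case: HM => _ [_ [_ [_ [_ [_ [_ [H _]]]]]]]. Qed.
Lemma bl_invle (x y : M) : ble x y -> ble (binv y) (binv x).
Proof. by case: HM => _ [_ [_ [_ [_ [_ [_ [_ H]]]]]]]; apply: H. Qed.
Lemma bl_invb : binv (bbot M) = btop M.
Proof.
have := bl_invle (bl_meetb (binv (btop M))).
by rewrite bl_invK /ble bl_meettl.
Qed.
Lemma bl_invt : binv (btop M) = bbot M.
Proof. by rewrite -bl_invb bl_invK. Qed.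
Lemma bl_inv_inj (x y : M) : binv x = binv y -> x = y.
Proof. by move=> H; rewrite -(bl_invK x) H bl_invK. Qed.
Lemma bl_inner_inv (x : M) : x <> bbot M /\ x <> btop M ->
  binv x <> bbot M /\ binv x <> btop M.
Proof.
case=> h1 h2; split=> E.
  by apply: h2; rewrite -(bl_invK x) E bl_invb.
by apply: h1; rewrite -(bl_invK x) E bl_invt.
Qed.
End BL.


Set Implicit Arguments.
Unset Strict Implicit.
Unset Printing Implicit Defensive.

Section HS.
Variables (I : eqType) (A : I -> biops).
Hypothesis HA : forall i, is_bilattice (A i).
Hypothesis Hbt : forall i, bbot (A i) <> btop (A i).

Local Notation H := (hcar A).
Local Notation inner x := (x <> bbot _ /\ x <> btop _).

Lemma hemb_bot i : hemb (A:=A) (bbot (A i)) = H0.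
Proof. by rewrite /hemb; case: excluded_middle_informative. Qed.
Lemma hemb_top i : hemb (A:=A) (btop (A i)) = H1.
Proof.
rewrite /hemb; case: excluded_middle_informative => [E|n0]; first by case: (Hbt (esym E)).
by case: excluded_middle_informative.
Qed.
Lemma hemb_in i (x : A i) (p : inner x) : hemb (A:=A) x = Hin p.
Proof.
rewrite /hemb; case: excluded_middle_informative => [E|n0]; first by case: p.
case: excluded_middle_informative => [E|n1]; first by case: p.
by congr Hin; apply: proof_irrelevance.
Qed.

Lemma hemb_cases i (x : A i) :
  (x = bbot _ /\ hemb (A:=A) x = H0) \/ (x = btop _ /\ hemb (A:=A) x = H1) \/
  exists p : inner x, hemb (A:=A) x = Hin p.
Proof.
case: (classic (x = bbot _)) => [->|n0]; first by left; rewrite hemb_bot.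
case: (classic (x = btop _)) => [->|n1]; first by right; left; rewrite hemb_top.
by right; right; exists (conj n0 n1); apply: hemb_in.
Qed.

Definition hget i (d : A i) (u : H) : A i :=
  match u with
  | @Hin _ _ j x _ => match j =P i with ReflectT e => htr e x | ReflectF _ => d end
  | _ => d end.

Definition hidx (u : H) : option I :=
  match u with @Hin _ _ j _ _ => Some j | _ => None end.

Lemma htr_id i (e : i = i) (x : A i) : htr e x = x.
Proof. by rewrite (eq_irrelevance e erefl). Qed.

Lemma hget_in i (x : A i) (p : inner x) d : hget d (Hin p) = x.
Proof. by rewrite /=; case: eqP => // e; rewrite htr_id. Qed.

Lemma hemb_inj i (x y : A i) : hemb (A:=A) x = hemb y -> x = y.
Proof.
case: (hemb_cases x) => [[-> ->]|[[-> ->]|[p ->]]];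
case: (hemb_cases y) => [[-> ->]|[[-> ->]|[q ->]]] //.
by move=> E; have := congr1 (hget x) E; rewrite !hget_in.
Qed.

Lemma hemb_cross i j (x : A i) (y : A j) : i <> j -> hemb (A:=A) x = hemb y ->
  (x = bbot _ /\ y = bbot _) \/ (x = btop _ /\ y = btop _).
Proof.
move=> ij.
case: (hemb_cases x) => [[-> ->]|[[-> ->]|[p ->]]];
case: (hemb_cases y) => [[-> ->]|[[-> ->]|[q ->]]] //; try by [left|right].
by move=> E; have := congr1 hidx E => /= [[]].
Qed.

Lemma hemb_H0 i (x : A i) : hemb (A:=A) x = H0 -> x = bbot _.
Proof. by case: (hemb_cases x) => [[-> ->]|[[-> ->]|[p ->]]]. Qed.
Lemma hemb_H1 i (x : A i) : hemb (A:=A) x = H1 -> x = btop _.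
Proof. by case: (hemb_cases x) => [[-> ->]|[[-> ->]|[p ->]]]. Qed.

Lemma hsurj (i0 : I) (u : H) : exists i (x : A i), u = hemb x.
Proof.
case: u => [|| i x p].
- by exists i0, (bbot _); rewrite hemb_bot.
- by exists i0, (btop _); rewrite hemb_top.
- by exists i, x; rewrite (hemb_in p).
Qed.

Lemma hmeet_emb i (x y : A i) :
  hmeet (hemb (A:=A) x) (hemb y) = hemb (bmeet x y).
Proof.
have M := HA i.
case: (hemb_cases x) => [[-> ->]|[[-> ->]|[p ->]]];
case: (hemb_cases y) => [[-> ->]|[[-> ->]|[q ->]]];
rewrite ?(bl_meetb M) ?(bl_meetbr M) ?(bl_meett M) ?(bl_meettl M) ?hemb_bot ?hemb_top //.
- by rewrite (hemb_in q).
- by rewrite (hemb_in p).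
- by rewrite /=; case: eqP => // e; rewrite htr_id.
Qed.

Lemma hjoin_emb i (x y : A i) :
  hjoin (hemb (A:=A) x) (hemb y) = hemb (bjoin x y).
Proof.
have M := HA i.
case: (hemb_cases x) => [[-> ->]|[[-> ->]|[p ->]]];
case: (hemb_cases y) => [[-> ->]|[[-> ->]|[q ->]]];
rewrite ?(bl_joinb M) ?(bl_joinbl M) ?(bl_joint M) ?(bl_jointr M) ?hemb_bot ?hemb_top //.
- by rewrite (hemb_in q).
- by rewrite (hemb_in p).
- by rewrite /=; case: eqP => // e; rewrite htr_id.
Qed.

Lemma hinv_emb i (x : A i) : hinv (hemb (A:=A) x) = hemb (binv x).
Proof.
case: (hemb_cases x) => [[-> ->]|[[-> ->]|[p ->]]].
- by rewrite (bl_invb (HA i)) ?hemb_top.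
- by rewrite (bl_invt (HA i)) ?hemb_bot.
- by [].
Qed.

Lemma hmeet_cross i j (x : A i) (y : A j) : i <> j -> inner x -> inner y ->
  hmeet (hemb (A:=A) x) (hemb y) = H0.
Proof.
move=> ij p q; rewrite (hemb_in p) (hemb_in q) /=.
by case: eqP.
Qed.
Lemma hjoin_cross i j (x : A i) (y : A j) : i <> j -> inner x -> inner y ->
  hjoin (hemb (A:=A) x) (hemb y) = H1.
Proof.
move=> ij p q; rewrite (hemb_in p) (hemb_in q) /=.
by case: eqP.
Qed.

End HS.


Set Implicit Arguments.
Unset Strict Implicit.
Unset Printing Implicit Defensive.

Lemma isConBI_ext (B : biops) (th ph : rel_of B) :
  (forall u v, th u v <-> ph u v) -> isConBI th -> isConBI ph.
Proof.
move=> E [[r s t] cm cj ci]; split; first split.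
- by move=> x; apply/E.
- by move=> x y /E /s /E.
- by move=> x y z /E h1 /E h2; apply/E; apply: t h1 h2.
- by move=> a b c d /E h1 /E h2; apply/E; apply: cm.
- by move=> a b c d /E h1 /E h2; apply/E; apply: cj.
- by move=> a b /E h; apply/E; apply: ci.
Qed.

Lemma nabla_ConBI (B : biops) : isConBI (@nabla B).
Proof. by []. Qed.

Lemma sig_ext (T : Type) (P : rel_of T -> Prop) (a b : {th : rel_of T | P th}) :
  (forall x y, sval a x y <-> sval b x y) -> a = b.
Proof.
case: a b => [a pa] [b pb] /= E.
have E' : a = b.
  by apply: functional_extensionality => x; apply: functional_extensionality => y;
     apply: propositional_extensionality.
by subst; f_equal; apply: proof_irrelevance.
Qed.

Section Con.
Variables (I : eqType) (A : I -> biops).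
Hypothesis HA : forall i, is_bilattice (A i).
Hypothesis Hbt : forall i, bbot (A i) <> btop (A i).
Hypothesis Hinner : forall i, exists x : A i, x <> bbot _ /\ x <> btop _.
Hypothesis Hother : forall i : I, exists j, j <> i.
Variable i0 : I.

Local Notation H := (hsum A).
Local Notation hembT := (@hemb_top I A Hbt).
Local Notation hembB := (@hemb_bot I A).
Local Notation hcases := (@hemb_cases I A Hbt).
Local Notation hinj := (@hemb_inj I A Hbt).
Local Notation hcross := (@hemb_cross I A Hbt).
Local Notation hH0 := (@hemb_H0 I A Hbt).
Local Notation hH1 := (@hemb_H1 I A Hbt).
Local Notation surj := (@hsurj I A Hbt i0).
Local Notation meE := (@hmeet_emb I A HA Hbt).
Local Notation joE := (@hjoin_emb I A HA Hbt).
Local Notation invE := (@hinv_emb I A HA Hbt).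
Local Notation emb := (@hemb I A _).
Local Notation inner x := (x <> bbot _ /\ x <> btop _).

Section Th.
Variable th : rel_of H.
Hypothesis Hth : isConBI th.

Let r : forall x, th x x. Proof. by case: Hth => [[]]. Qed.
Let s : forall x y, th x y -> th y x. Proof. by case: Hth => [[]]. Qed.
Let t : forall x y z, th x y -> th y z -> th x z. Proof. by case: Hth => [[]]. Qed.
Let cm : forall a b c d, th a b -> th c d -> th (hmeet a c) (hmeet b d).
Proof. by case: Hth. Qed.
Let cj : forall a b c d, th a b -> th c d -> th (hjoin a c) (hjoin b d).
Proof. by case: Hth. Qed.
Let ci : forall a b, th a b -> th (hinv a) (hinv b).
Proof. by case: Hth. Qed.

Lemma nabla_of : th H0 H1 -> forall u v, th u v.
Proof.
move=> h01.
have h : forall u, th u H0.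
  move=> u; have := cm (r u) (s h01).
  by case: u.
by move=> u v; apply: t (h u) (s (h v)).
Qed.

Lemma bot_single : ~ th H0 H1 -> forall u, th u H0 -> u = H0.
Proof.
move=> n01 u hu.
have [i [x Eu]] := surj u; subst u.
case: (hcases x) => [[_ ->]|[[_ E]|[p E]]] //.
  by rewrite E in hu; case: n01; apply: s.
have [j ji] := Hother i.
have [y q] := Hinner j.
have ij : i <> j by move=> e; apply: ji; rewrite e.
have h1 := cj (r (emb y)) hu.
rewrite hjoin_cross // -(hembB j) joE (bl_joinb (HA j)) in h1.
have h2 := ci hu.
rewrite invE /= in h2.
have h3 := cm h2 (r (emb y)).
rewrite hmeet_cross // in h3; last by apply: bl_inner_inv.
rewrite -(hembT j) meE (bl_meettl (HA j)) in h3.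
by case: n01; apply: t h3 (s h1).
Qed.

Lemma top_single : ~ th H0 H1 -> forall u, th u H1 -> u = H1.
Proof.
move=> n01 u hu.
have [i [x Eu]] := surj u; subst u.
have := bot_single n01 (ci hu); rewrite invE /= => /hH0 E.
by rewrite -(bl_invK (HA i) x) E (bl_invb (HA i)) hembT.
Qed.

Lemma cross_no : ~ th H0 H1 -> forall i j (x : A i) (y : A j), i <> j ->
  inner x -> inner y -> th (emb x) (emb y) -> False.
Proof.
move=> n01 i j x y ij p q h.
have := cm (r (emb x)) h.
rewrite meE (bl_meetI (HA i)) hmeet_cross // => /(bot_single n01) /hH0.
by case: p.
Qed.

Lemma decomp : ~ th H0 H1 -> forall u v, th u v ->
  exists i (x y : A i), u = emb x /\ v = emb y.
Proof.
move=> n01 u v h.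
have [i [x Eu]] := surj u; have [j [y Ev]] := surj v; subst u v.
case: (eq_comparable i j) => [e|ne].
  by subst j; exists i, x, y.
case: (hcases x) => [[_ E]|[[_ E]|[p E]]].
- rewrite E in h *; have := bot_single n01 (s h) => ->.
  by exists i, (bbot _), (bbot _); rewrite hembB.
- rewrite E in h *; have := top_single n01 (s h) => ->.
  by exists i, (btop _), (btop _); rewrite hembT.
case: (hcases y) => [[_ E']|[[_ E']|[q E']]].
- rewrite E' in h *; have := bot_single n01 h => ->.
  by exists i, (bbot _), (bbot _); rewrite hembB.
- rewrite E' in h *; have := top_single n01 h => ->.
  by exists i, (btop _), (btop _); rewrite hembT.
by case: (cross_no n01 ne p q h).
Qed.

Unset Implicit Arguments.
Definition restr (i : I) : rel_of (A i) := fun x y => th (emb x) (emb y).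
Set Implicit Arguments.


Lemma restr_Con01 : ~ th H0 H1 -> forall i, isConBI01 (restr i).
Proof.
move=> n01 i; split; first split; first split.
- by move=> x; apply: r.
- by move=> x y; apply: s.
- by move=> x y z; apply: t.
- by move=> a b c d h1 h2; rewrite /restr -!meE; apply: cm.
- by move=> a b c d h1 h2; rewrite /restr -!joE; apply: cj.
- by move=> a b h; rewrite /restr -!invE; apply: ci.
- by move=> x; rewrite /restr hembB => /(bot_single n01) /hH0.
- by move=> x; rewrite /restr hembT => /(top_single n01) /hH1.
Qed.

Lemma hsum_restr : ~ th H0 H1 -> forall u v, th u v <-> hsum_rel restr u v.
Proof.
move=> n01 u v; split.
  move=> h; have [i [x [y [Eu Ev]]]] := decomp n01 h; subst u v.
  by left; exists i, x, y.
case=> [[i [x [y [h [-> ->]]]]]|[[i [j [x [y [h1 h2 -> ->]]]]]|[i [j [x [y [h1 h2 -> ->]]]]]]] //.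
- rewrite /restr !hembB in h1 h2.
  by rewrite (bot_single n01 h1) (bot_single n01 h2); apply: r.
- rewrite /restr !hembT in h1 h2.
  by rewrite (top_single n01 h1) (top_single n01 h2); apply: r.
Qed.

End Th.

Section Al.
Unset Implicit Arguments.
Variable al : forall i, rel_of (A i).
Set Implicit Arguments.
Hypothesis Hal : forall i, isConBI01 (al i).

Let ar i (x : A i) : al i x x. Proof. case: (Hal i) => [[[R0 S0 T0] M0 J0 V0] B0 B1]; apply: R0. Qed.
Let asy i (x y : A i) : al i x y -> al i y x. Proof. case: (Hal i) => [[[R0 S0 T0] M0 J0 V0] B0 B1]; apply: S0. Qed.
Let atr i (x y z : A i) : al i x y -> al i y z -> al i x z.
Proof. case: (Hal i) => [[[R0 S0 T0] M0 J0 V0] B0 B1]; apply: T0. Qed.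
Let am i (a b c d : A i) : al i a b -> al i c d -> al i (bmeet a c) (bmeet b d).
Proof. case: (Hal i) => [[[R0 S0 T0] M0 J0 V0] B0 B1]; apply: M0. Qed.
Let aj i (a b c d : A i) : al i a b -> al i c d -> al i (bjoin a c) (bjoin b d).
Proof. case: (Hal i) => [[[R0 S0 T0] M0 J0 V0] B0 B1]; apply: J0. Qed.
Let ai i (a b : A i) : al i a b -> al i (binv a) (binv b).
Proof. case: (Hal i) => [[[R0 S0 T0] M0 J0 V0] B0 B1]; apply: V0. Qed.
Let ab i (x : A i) : al i x (bbot _) -> x = bbot _.
Proof. case: (Hal i) => [[[R0 S0 T0] M0 J0 V0] B0 B1]; apply: B0. Qed.
Let atp i (x : A i) : al i x (btop _) -> x = btop _.
Proof. case: (Hal i) => [[[R0 S0 T0] M0 J0 V0] B0 B1]; apply: B1. Qed.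

Definition S1 (u v : H) := exists i (x y : A i), al i x y /\ u = emb x /\ v = emb y.

Lemma hsum_S1 u v : hsum_rel al u v <-> S1 u v.
Proof.
split.
  case=> [//|[[i [j [x [y [h1 h2 -> ->]]]]]|[i [j [x [y [h1 h2 -> ->]]]]]]].
  - by rewrite (ab h1) (ab h2) !hembB; exists i, (bbot _), (bbot _); rewrite hembB.
  - by rewrite (atp h1) (atp h2) !hembT; exists i, (btop _), (btop _); rewrite hembT.
by move=> h; left.
Qed.

Lemma pair_cases a b c d : S1 a b -> S1 c d ->
  (exists k (x y z w : A k), [/\ al k x y, al k z w, a = emb x, b = emb y &
      c = emb z /\ d = emb w]) \/
  (exists i j (x y : A i) (z w : A j), [/\ i <> j, inner x, inner y, inner z &
      [/\ inner w, a = emb x, b = emb y, c = emb z & d = emb w]]).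
Proof.
move=> [i [x [y [hxy [-> ->]]]]] [j [z [w [hzw [-> ->]]]]].
case: (eq_comparable i j) => [e|ne].
  by subst j; left; exists i, x, y, z, w.
case: (classic (x = bbot _)) => [ex|nxb].
  have ey : y = bbot _ by apply: ab; apply: asy; rewrite -ex.
  left; exists j, (bbot _), (bbot _), z, w; split => //; by rewrite ?ex ?ey !hembB.
case: (classic (x = btop _)) => [ex|nxt].
  have ey : y = btop _ by apply: atp; apply: asy; rewrite -ex.
  left; exists j, (btop _), (btop _), z, w; split => //; by rewrite ?ex ?ey !hembT.
case: (classic (z = bbot _)) => [ez|nzb].
  have ew : w = bbot _ by apply: ab; apply: asy; rewrite -ez.
  left; exists i, x, y, (bbot _), (bbot _); split => //; by rewrite ?ez ?ew !hembB.
case: (classic (z = btop _)) => [ez|nzt].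
  have ew : w = btop _ by apply: atp; apply: asy; rewrite -ez.
  left; exists i, x, y, (btop _), (btop _); split => //; by rewrite ?ez ?ew !hembT.
have py : inner y.
  split=> ey; [apply: nxb; apply: ab | apply: nxt; apply: atp]; by rewrite -ey.
have pw : inner w.
  split=> ew; [apply: nzb; apply: ab | apply: nzt; apply: atp]; by rewrite -ew.
by right; exists i, j, x, y, z, w.
Qed.

Lemma S1_H0 : S1 H0 H0.
Proof. by exists i0, (bbot _), (bbot _); rewrite hembB. Qed.
Lemma S1_H1 : S1 H1 H1.
Proof. by exists i0, (btop _), (btop _); rewrite hembT. Qed.

Lemma S1_ConBI : isConBI S1.
Proof.
split; first split.
- by move=> u; have [i [x ->]] := surj u; exists i, x, x.
- by move=> u v [i [x [y [h [-> ->]]]]]; exists i, y, x; split => //; apply: asy.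
- move=> u v w [i [x [y [h [-> Ev]]]]] [j [y' [z [h' [Ev' ->]]]]].
  rewrite Ev in Ev'.
  case: (eq_comparable i j) => [e|ne].
    subst j; have ey := hinj Ev'; subst y'.
    by exists i, x, z; split => //; apply: atr h h'.
  case: (hcross ne Ev') => [[ey ey']|[ey ey']].
  + subst y y'; rewrite (ab h) (ab (asy h')) !hembB; exact: S1_H0.
  + subst y y'; rewrite (atp h) (atp (asy h')) !hembT; exact: S1_H1.
- move=> a b c d h1 h2; case: (pair_cases h1 h2).
    case=> k [x [y [z [w [hxy hzw -> -> [-> ->]]]]]].
    by exists k, (bmeet x z), (bmeet y w); rewrite /= !meE; split => //; apply: am.
  case=> i [j [x [y [z [w [ne px py pz [pw -> -> -> ->]]]]]]].
  by rewrite /= !hmeet_cross //; exact: S1_H0.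
- move=> a b c d h1 h2; case: (pair_cases h1 h2).
    case=> k [x [y [z [w [hxy hzw -> -> [-> ->]]]]]].
    by exists k, (bjoin x z), (bjoin y w); rewrite /= !joE; split => //; apply: aj.
  case=> i [j [x [y [z [w [ne px py pz [pw -> -> -> ->]]]]]]].
  by rewrite /= !hjoin_cross //; exact: S1_H1.
- move=> u v [i [x [y [h [-> ->]]]]].
  by exists i, (binv x), (binv y); rewrite /= !invE; split => //; apply: ai.
Qed.

Lemma hsum_ConBI : @isConBI (hsum A) (hsum_rel al).
Proof. by apply: (@isConBI_ext (hsum A) S1 (hsum_rel al) _ S1_ConBI) => u v; split; move/hsum_S1. Qed.

Lemma hsum_not01 : ~ hsum_rel al H0 H1.
Proof.
move/hsum_S1=> [i [x [y [h [/esym /hH0 ex /esym /hH1 ey]]]]].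
subst x y; exact (Hbt (esym (ab (asy h)))).
Qed.

Lemma restr_hsum i (x y : A i) : restr (hsum_rel al) i x y <-> al i x y.
Proof.
rewrite /restr; split; last by move=> h; left; exists i, x, y.
move/hsum_S1=> [j [x' [y' [h [Ex Ey]]]]].
case: (eq_comparable j i) => [e|ne].
  by subst j; rewrite (hinj Ex) (hinj Ey).
case: (hcross ne (esym Ex)) => [[ex ex']|[ex ex']];
case: (hcross ne (esym Ey)) => [[ey ey']|[ey ey']]; subst; try exact: ar.
- by case: (Hbt (atp h)).
- by case: (Hbt (esym (ab h))).
Qed.

End Al.

Lemma char1 (th : rel_of H) :
  isConBI th <->
  ((forall u v, th u v <-> nabla u v) \/
   exists al : forall i, rel_of (A i),
     (forall i, isConBI01 (al i)) /\ (forall u v, th u v <-> hsum_rel al u v)).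
Proof.
split.
  move=> Hth; case: (classic (th H0 H1)) => [h|n].
    by left=> u v; split => // _; apply: nabla_of.
  right; exists (restr th); split; first exact: restr_Con01.
  exact: hsum_restr.
case=> [E|[al [Hal E]]].
  by apply: (@isConBI_ext H (@nabla H)) => // u v; split => /E.
apply: (@isConBI_ext H (hsum_rel al)) (hsum_ConBI Hal) => u v.
by split => /E.
Qed.

Definition F (th : ConBI H) : option (forall i, ConBI01 (A i)) :=
  match excluded_middle_informative (sval th H0 H1) with
  | left _ => None
  | right n => Some (fun i => exist _ (restr (sval th) i)
                     (restr_Con01 (svalP th) n i))
  end.

Definition G (o : option (forall i, ConBI01 (A i))) : ConBI H :=
  match o with
  | None => exist _ (@nabla H) (@nabla_ConBI H)
  | Some al => exist _ (hsum_rel (fun i => sval (al i)))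
                 (hsum_ConBI (fun i => svalP (al i)))
  end.

Lemma FG_iso : order_iso (@ConBI_le H)
     (addtop_le (prod_le (fun i => @ConBI01_le (A i)))).
Proof.
exists F; split.
  exists G.
  - move=> [th Hth]; rewrite /F /=.
    case: excluded_middle_informative => [h|n]; apply: sig_ext => u v /=.
      by split => // _; apply: nabla_of.
    by split => /(hsum_restr Hth n).
  - case=> [al|]; rewrite /F /=.
      case: excluded_middle_informative => [h|n].
        by case: (hsum_not01 (fun i => svalP (al i)) h).
      congr Some; apply: functional_extensionality_dep => i.
      apply: sig_ext => x y /=.
      exact: (restr_hsum (fun i => svalP (al i))).
    by case: excluded_middle_informative => // - [].
move=> [th Hth] [ph Hph]; rewrite /F /ConBI_le /rel_incl /=.
case: excluded_middle_informative => [h|n];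
case: excluded_middle_informative => [h'|n'] /=.
- by split => // _ u v _; apply: nabla_of.
- by split => // /(_ _ _ h).
- by split => // _ u v _; apply: nabla_of.
split.
  by move=> I1 i x y; rewrite /ConBI01_le /rel_incl /restr /=; apply: I1.
move=> I1 u v /(hsum_restr Hth n) h; apply/(hsum_restr Hph n').
case: h => [[i [x [y [h [-> ->]]]]]|[[i [j [x [y [h1 h2 -> ->]]]]]|[i [j [x [y [h1 h2 -> ->]]]]]]].
- by left; exists i, x, y; split => //; apply: (I1 i).
- by right; left; exists i, j, x, y; split => //; [apply: (I1 i)|apply: (I1 j)].
- by right; right; exists i, j, x, y; split => //; [apply: (I1 i)|apply: (I1 j)].
Qed.

End Con.


Set Implicit Arguments.
Unset Strict Implicit.
Unset Printing Implicit Defensive.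

Section Os.
Variable M : biops.
Hypothesis HM : is_bilattice M.

Lemma osum_bl : is_bilattice (osum M).
Proof.
have [mC [jC [mA [jA [amj [ajm [bd [iK iL]]]]]]]] := HM.
split; first by case=> [|x|] [|y|] //=; rewrite mC.
split; first by case=> [|x|] [|y|] //=; rewrite jC.
split; first by case=> [|x|] [|y|] [|z|] //=; rewrite mA.
split; first by case=> [|x|] [|y|] [|z|] //=; rewrite jA.
split; first by case=> [|x|] [|y|] //=; rewrite ?amj ?(bl_meetI HM).
split; first by case=> [|x|] [|y|] //=; rewrite ?ajm ?(bl_joinI HM).
split; first by case=> [|x|] //; split.
split; first by case=> [|x|] //=; rewrite iK.
case=> [|x|] [|y|] //=; rewrite /ble /=; try done.
by case=> E; congr OMid; apply: iL.
Qed.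

Definition oext (al : rel_of M) : rel_of (osum M) := fun u v =>
  match u, v with
  | OBot, OBot => True
  | OTop, OTop => True
  | OMid x, OMid y => al x y
  | _, _ => False
  end.

Definition ors (be : rel_of (osum M)) : rel_of M := fun x y => be (OMid x) (OMid y).

Lemma oext_Con01 al : isConBI al -> isConBI01 (oext al).
Proof.
case=> [[r s t] cm cj ci]; split; first split; first split.
- by case=> //=.
- by case=> [|x|] [|y|] //=; apply: s.
- by case=> [|x|] [|y|] [|z|] //=; apply: t.
- by case=> [|a|] [|b|] [|c|] [|d|] //= h1 h2; apply: cm.
- by case=> [|a|] [|b|] [|c|] [|d|] //= h1 h2; apply: cj.
- by case=> [|a|] [|b|] //= h; apply: ci.
- by case.
- by case.
Qed.

Lemma ors_ConBI be : isConBI01 be -> isConBI (ors be).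
Proof.
case=> [[[r s t] cm cj ci] _ _]; split; first split.
- by move=> x; apply: r.
- by move=> x y; apply: s.
- by move=> x y z; apply: t.
- by move=> a b c d h1 h2; apply: (cm _ _ _ _ h1 h2).
- by move=> a b c d h1 h2; apply: (cj _ _ _ _ h1 h2).
- by move=> a b h; apply: (ci _ _ h).
Qed.

Lemma oext_ors be : isConBI01 be -> forall u v, oext (ors be) u v <-> be u v.
Proof.
case=> [[[r s t] _ _ _] hb ht].
case=> [|x|] [|y|] //=; split => // h;
  first [ by case: (hb _ h) | by case: (ht _ h) | by case: (hb _ (s _ _ h))
        | by case: (ht _ (s _ _ h)) | by apply: r ].
Qed.
End Os.


Lemma oext_mono (M : biops) (a b : rel_of M) :
  rel_incl a b -> rel_incl (oext a) (oext b).
Proof. by move=> h; case=> [|x|] [|y|] //=; apply: h. Qed.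

Lemma order_iso_trans (P Q R : Type) (lP : P -> P -> Prop) (lQ : Q -> Q -> Prop)
  (lR : R -> R -> Prop) : order_iso lP lQ -> order_iso lQ lR -> order_iso lP lR.
Proof.
move=> [f [bf Hf]] [g [bg Hg]]; exists (g \o f); split; first exact: bij_comp.
by move=> x y; rewrite Hf Hg.
Qed.

Section Fam.
Variables (I : eqType) (L : I -> biops).
Hypothesis HL : forall i, is_bilattice (L i).
Variable i0 : I.
Hypothesis Hother : forall i : I, exists j, j <> i.

Local Notation A := (fun i => osum (L i)).

Lemma HAo : forall i, is_bilattice (A i).
Proof. by move=> i; apply: osum_bl. Qed.
Lemma Hbto : forall i, bbot (A i) <> btop (A i).
Proof. by []. Qed.
Lemma Hino : forall i, exists x : A i, x <> bbot (A i) /\ x <> btop (A i).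
Proof. by move=> i; exists (OMid (bbot (L i))). Qed.

Lemma hsum_lsum (be : forall i, rel_of (A i)) : (forall i, isConBI01 (be i)) ->
  forall u v, hsum_rel be u v <-> lsum_rel (fun i => ors (be i)) u v.
Proof.
move=> Hbe u v; rewrite (hsum_S1 Hbto Hbe); split.
  move=> [i [x [y [h [-> ->]]]]].
  case: (Hbe i) => [[[r s t] _ _ _] hb ht].
  case: x h => [|x|] h.
  - by rewrite (hb _ (s _ _ h)) !hemb_bot; left.
  - case: y h => [|y|] h.
    + by case: (hb _ h).
    + by right; right; exists i, x, y.
    + by case: (ht _ h).
  - by rewrite (ht _ (s _ _ h)) !(hemb_top Hbto); right; left.
case=> [[-> ->]|[[-> ->]|[i [x [y [h [-> ->]]]]]]].
- exists i0, OBot, OBot; rewrite hemb_bot; split => //.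
  by case: (Hbe i0) => [[[r _ _] _ _ _] _ _]; apply: r.
- exists i0, OTop, OTop; rewrite (hemb_top Hbto); split => //.
  by case: (Hbe i0) => [[[r _ _] _ _ _] _ _]; apply: r.
- by exists i, (OMid x), (OMid y).
Qed.

Lemma char2 (th : rel_of (hsum A)) :
  isConBI th <->
  ((forall u v, th u v <-> nabla u v) \/
   exists al : forall i, rel_of (L i),
     (forall i, isConBI (al i)) /\ (forall u v, th u v <-> lsum_rel al u v)).
Proof.
rewrite (char1 HAo Hbto Hino Hother i0); split.
  case=> [E|[be [Hbe E]]]; first by left.
  right; exists (fun i => ors (be i)); split.
    by move=> i; apply: ors_ConBI.
  by move=> u v; rewrite E hsum_lsum.
case=> [E|[al [Hal E]]]; first by left.
right; exists (fun i => oext (al i)); split.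
  by move=> i; apply: oext_Con01.
move=> u v; rewrite E (hsum_lsum (be := fun i => oext (al i))) //.
by move=> i; apply: oext_Con01.
Qed.

Definition hO (o : option (forall i, ConBI01 (A i))) : option (forall i, ConBI (L i)) :=
  omap (fun f i => exist _ (ors (sval (f i))) (ors_ConBI (svalP (f i)))) o.
Definition hOinv (o : option (forall i, ConBI (L i))) : option (forall i, ConBI01 (A i)) :=
  omap (fun g i => exist _ (oext (sval (g i))) (oext_Con01 (svalP (g i)))) o.

Lemma iso2 : order_iso (addtop_le (prod_le (fun i => @ConBI01_le (A i))))
                       (addtop_le (prod_le (fun i => @ConBI_le (L i)))).
Proof.
exists hO; split.
  exists hOinv.
  - case=> [f|] //=; congr Some; apply: functional_extensionality_dep => i.
    by apply: sig_ext => u v /=; apply: oext_ors; apply: svalP.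
  - case=> [g|] //=; congr Some; apply: functional_extensionality_dep => i.
    by apply: sig_ext.
case=> [f|] [g|] //=.
rewrite /prod_le /ConBI01_le /ConBI_le /=; split.
  by move=> h i x y; apply: h.
move=> h i u v.
move/(oext_ors (svalP (f i))) => h1; apply/(oext_ors (svalP (g i))).
by apply: (oext_mono (h i)).
Qed.

End Fam.

Unset Implicit Arguments.
Set Strict Implicit.

Theorem proposition4p21 (t : nat) (K L : 'I_t -> biops) :
  2 <= t ->
  (forall i, is_bilattice (K i)) ->
  (forall i, is_bilattice (L i)) ->
  (forall i, exists a b c : K i, [/\ a <> b, a <> c & b <> c]) ->
  (* (1) K = boxplus_i K_i *)
  ((forall th : rel_of (hsum K),
      isConBI th <->
      ((forall u v, th u v <-> nabla u v) \/
       exists al : forall i, rel_of (K i),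
         (forall i, isConBI01 (al i)) /\
         (forall u v, th u v <-> hsum_rel al u v))) /\
   order_iso (@ConBI_le (hsum K))
     (addtop_le (prod_le (fun i => @ConBI01_le (K i))))) /\
  (* (2) L = boxplus_i (L2 (+) L_i (+) L2) *)
  ((forall th : rel_of (hsum (fun i => osum (L i))),
      isConBI th <->
      ((forall u v, th u v <-> nabla u v) \/
       exists al : forall i, rel_of (L i),
         (forall i, isConBI (al i)) /\
         (forall u v, th u v <-> lsum_rel al u v))) /\
   order_iso (@ConBI_le (hsum (fun i => osum (L i))))
     (addtop_le (prod_le (fun i => @ConBI_le (L i))))).
Proof.
move=> ht HK HL H3.
have t0 : 0 < t by apply: leq_trans ht.
pose i0 : 'I_t := Ordinal t0.
have Hother : forall i : 'I_t, exists j, j <> i.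
  move=> i; case: (eqVneq (val i) 0) => e.
    by exists (Ordinal ht) => E; move: e; rewrite -E.
  by exists i0 => E; move: e; rewrite -E.
have Hbt : forall i, bbot (K i) <> btop (K i).
  move=> i E; have [a [b [c [ab _ _]]]] := H3 i; apply: ab.
  have all0 : forall x : K i, x = bbot (K i).
    by move=> x; rewrite -(bl_meett (HK i) x) -E (bl_meetbr (HK i)).
  by rewrite (all0 a) (all0 b).
have Hin : forall i, exists x : K i, x <> bbot (K i) /\ x <> btop (K i).
  move=> i; have [a [b [c [ab ac bc]]]] := H3 i.
  case: (classic (a = bbot (K i))) => [ea|na];
  case: (classic (a = btop (K i))) => [ta|nta];
  case: (classic (b = bbot (K i))) => [eb|nb];
  case: (classic (b = btop (K i))) => [tb|ntb];
  case: (classic (c = bbot (K i))) => [ec|nc];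
  case: (classic (c = btop (K i))) => [tc|ntc]; subst;
  try (by exists a); try (by exists b); try (by exists c);
  try (by case: (Hbt i)); try (by case: (Hbt i (esym _))); by [].
split.
  split; first by move=> th; apply: (char1 HK Hbt Hin Hother i0).
  exact: (FG_iso HK Hbt Hin Hother i0).
split; first by move=> th; apply: (char2 HL i0 Hother).
apply: order_iso_trans (iso2 L).
exact: (FG_iso (HAo HL) (@Hbto _ L) (@Hino _ L) Hother i0).
Qed.
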